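(* For any valid threshold vector $t$, any sparsified weight vector $\tilde w$ and any integral assignment $\sigma:J\to[m]$, the optimal value of the linear program minimizing $\mathrm{LP}_t(\tilde w;x,y,z)$ subject to (OLB1)–(OLB5) is at most $\sum_{i=1}^m h_t(\tilde w;\mathrm{load}_\sigma(i))$.
   Context: Jobs $J$, machines $[m]$, processing times $p_{ij}\ge0$; $\mathrm{load}_\sigma(i)=\sum_{j:\sigma(j)=i}p_{ij}$. Fix $\delta>0$ and $P=\{\min\{\lceil(1+\delta)^s\rceil,m\}:s\in\mathbb{Z}_{\ge0}\}$; for $\ell\in P$, $\mathrm{next}(\ell)$ is the smallest element of $P$ larger than $\ell$ if $\ell<m$, and $\mathrm{next}(m)=m+1$. A threshold vector $t\in\mathbb{R}^P$ (with $t_{m+1}:=0$) is valid if $t_\ell\ge t_{\mathrm{next}(\ell)}$ for all $\ell\in P$. A sparsified weight vector $\tilde w$ arises from a non-increasing $w\in\mathbb{R}^m_{\ge0}$ by $\tilde w_i=w_i$ for $i\in P$ and $\tilde w_i=w_{\mathrm{next}(\ell)}$ for $\ell\in P$, $\ell<i<\mathrm{next}(\ell)$; $\tilde w_{m+1}:=0$. $h_t(\tilde w;a)=\sum_{\ell\in P}(\tilde w_\ell-\tilde w_{\mathrm{next}(\ell)})(a-t_\ell)^+$. Variables $x_{ij},z^{(\ell)}_{ij},y^{(\ell)}_{ij}\ge0$ ($i\in[m],j\in J,\ell\in P$), $z^{(m+1)}_{ij}:=0$. (OLB1) $\sum_ix_{ij}=1$; (OLB2) $x_{ij}=z^{(\ell)}_{ij}+y^{(\ell)}_{ij}$;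 (OLB3) $z^{(\mathrm{next}(\ell))}_{ij}\le z^{(\ell)}_{ij}$; (OLB4) $\sum_jp_{ij}(z^{(\ell)}_{ij}-z^{(\mathrm{next}(\ell))}_{ij})\le t_\ell-t_{\mathrm{next}(\ell)}$; (OLB5) $p_{ij}y^{(\ell)}_{ij}\ge(p_{ij}-t_\ell)x_{ij}$, all for all applicable $i,j,\ell$. Objective $\mathrm{LP}_t(\tilde w;x,y,z)=\sum_i\sum_{\ell\in P}\sum_j(\tilde w_\ell-\tilde w_{\mathrm{next}(\ell)})p_{ij}y^{(\ell)}_{ij}$. *)

(* Defs.v *)
From HB Require Import structures.
From mathcomp Require Import all_boot all_order all_algebra.
From mathcomp Require Import boolp reals.
Set Implicit Arguments. Unset Strict Implicit. Unset Printing Implicit Defensive.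
Import Order.TTheory GRing.Theory Num.Theory.
Local Open Scope ring_scope.

Section OLB.
Variables (R : realType) (delta : R) (m : nat).

Definition inP (ell : nat) : Prop :=
  exists s : nat, (ell%:Z) = Order.min (Num.ceil ((1 + delta) ^+ s)) (m%:Z).
Definition inPb (ell : nat) : bool := `[< inP ell >].

(* next(ell): smallest element of P larger than ell if ell < m (all elements
   of P lie in [1,m], so it is searched in (ell, m]); next(m) = m+1. *)
Definition nextP (ell : nat) : nat :=
  if (ell < m)%N then nth m.+1 [seq k <- iota ell.+1 (m - ell) | inPb k] 0
  else m.+1.

Definition prevP (i : nat) : nat := last 0%N [seq k <- iota 0 i | inPb k].

Definition text (t : nat -> R) (ell : nat) : R := if ell == m.+1 then 0 else t ell.

Definition valid_threshold (t : nat -> R) : Prop :=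
  forall ell, inPb ell -> text t (nextP ell) <= text t ell.

Definition weight_vector (w : nat -> R) : Prop :=
  (forall i, (1 <= i <= m)%N -> 0 <= w i) /\
  (forall i k, (1 <= i)%N -> (i <= k <= m)%N -> w k <= w i).

Definition sparsify (w : nat -> R) (i : nat) : R :=
  if i == m.+1 then 0
  else if inPb i then w i
  else w (nextP (prevP i)).

Definition h_t (t : nat -> R) (wt : nat -> R) (a : R) : R :=
  \sum_(ell < m.+1 | inPb ell) (wt ell - wt (nextP ell)) * Num.max (a - t ell) 0.

Variable J : finType.

Definition load (p : 'I_m -> J -> R) (sigma : J -> 'I_m) (i : 'I_m) : R :=
  \sum_(j | sigma j == i) p i j.

Definition zext (z : nat -> 'I_m -> J -> R) (ell : nat) (i : 'I_m) (j : J) : R :=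
  if ell == m.+1 then 0 else z ell i j.

Definition OLB_feasible (p : 'I_m -> J -> R) (t : nat -> R)
  (x : 'I_m -> J -> R) (y z : nat -> 'I_m -> J -> R) : Prop :=
  [/\ (forall i j, 0 <= x i j) /\
      (forall ell i j, inPb ell -> 0 <= z ell i j /\ 0 <= y ell i j),
      (* OLB1 *) (forall j, \sum_(i < m) x i j = 1) /\
      (* OLB2 *) (forall ell i j, inPb ell -> x i j = z ell i j + y ell i j),
      (* OLB3 *) (forall ell i j, inPb ell -> zext z (nextP ell) i j <= z ell i j),
      (* OLB4 *) (forall ell i, inPb ell ->
                   \sum_j p i j * (z ell i j - zext z (nextP ell) i j)
                     <= text t ell - text t (nextP ell)) &
      (* OLB5 *) (forall ell i j, inPb ell ->
                   p i j * y ell i j >= (p i j - t ell) * x i j)].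

Definition LP_obj (p : 'I_m -> J -> R) (wt : nat -> R)
  (y : nat -> 'I_m -> J -> R) : R :=
  \sum_(i < m) \sum_(ell < m.+1 | inPb ell) \sum_j
     (wt ell - wt (nextP ell)) * p i j * y ell i j.

End OLB.

(* Main.v *)
Require Import Defs.
From HB Require Import structures.
From mathcomp Require Import all_boot all_order all_algebra.
From mathcomp Require Import boolp reals.
From mathcomp Require Import ring lra zify.
Import Order.TTheory GRing.Theory Num.Theory.
Local Open Scope ring_scope.

Section Aux.
Variable R : realType.

Lemma cfrac_ge0 (L T : R) : 0 <= L -> 0 <= T -> 0 <= Num.min 1 (T / L).
Proof. by move=> hL hT; rewrite le_min ler01 divr_ge0. Qed.

Lemma cfrac_le1 (L T : R) : Num.min 1 (T / L) <= 1.
Proof. by rewrite ge_min lexx. Qed.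

Lemma Lc_min (L T : R) : 0 < L -> L * Num.min 1 (T / L) = Num.min L T.
Proof.
move=> hL; have hL0 : L != 0 by rewrite gt_eqF.
have E : L * (T / L) = T by rewrite mulrC -mulrA mulVf // mulr1.
case: (leP 1 (T / L)) => h.
- rewrite mulr1; have : L <= T by rewrite -E -{1}(mulr1 L) ler_wpM2l // ltW.
  by move=> h2; rewrite min_l.
- rewrite E; have : T < L by rewrite -[X in X < _]E -[X in _ < X]mulr1 ltr_pM2l.
  by move=> h2; rewrite min_r // ltW.
Qed.

Lemma key_obj (L T : R) : 0 <= L -> 0 <= T ->
  L * (1 - Num.min 1 (T / L)) = Num.max (L - T) 0.
Proof.
move=> hL hT; case: (eqVneq L 0) => [->|hL0].
  by rewrite mul0r sub0r max_r // oppr_le0.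
have hLp : 0 < L by rewrite lt_def hL0.
rewrite mulrBr mulr1 Lc_min //.
case: (leP L T) => h; first by rewrite subrr max_r // subr_le0.
by rewrite max_l // subr_ge0 ltW.
Qed.

Lemma key_olb4 (L T1 T2 : R) : 0 <= L -> 0 <= T2 -> T2 <= T1 ->
  L * (Num.min 1 (T1 / L) - Num.min 1 (T2 / L)) <= T1 - T2.
Proof.
move=> hL hT h12; case: (eqVneq L 0) => [->|hL0].
  by rewrite mul0r subr_ge0.
have hLp : 0 < L by rewrite lt_def hL0.
rewrite mulrBr !Lc_min //.
case: (leP L T1) => a; case: (leP L T2) => b; lra.
Qed.

Lemma key_olb5 (L T P : R) : 0 <= P -> P <= L -> 0 <= T ->
  P * Num.min 1 (T / L) <= T.
Proof.
move=> hP hPL hT; case: (eqVneq L 0) => [->|hL0].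
  by rewrite invr0 mulr0 (@min_r _ _ 1 0) ?ler01 // mulr0.
have hLp : 0 < L by rewrite lt_def hL0 (le_trans hP).
apply: (@le_trans _ _ (L * Num.min 1 (T / L))).
  by rewrite ler_wpM2r // le_min ler01 divr_ge0 // ltW.
by rewrite Lc_min // ge_min lexx orbT.
Qed.

End Aux.

Lemma inP_le (R : realType) (delta : R) (m ell : nat) :
  inPb delta m ell -> (ell <= m)%N.
Proof.
move/asboolP=> [s E]; rewrite -lez_nat E.
by rewrite ge_min lexx orbT.
Qed.
Arguments inP_le {R delta m ell}.

Lemma nextP_spec (R : realType) (delta : R) (m ell : nat) :
  nextP delta m ell = m.+1 \/ (inPb delta m (nextP delta m ell) /\ (ell < nextP delta m ell)%N).
Proof.
rewrite /nextP; case: ifP => _; last by left.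
case E: [seq k <- iota ell.+1 (m - ell) | inPb delta m k] => [|a s]; first by left.
right => /=.
have : a \in [seq k <- iota ell.+1 (m - ell) | inPb delta m k] by rewrite E mem_head.
by rewrite mem_filter mem_iota => /andP [-> /andP [h _]].
Qed.

Lemma t_nonneg (R : realType) (delta : R) (m : nat) (t : nat -> R) :
  valid_threshold delta m t ->
  forall ell, inPb delta m ell -> 0 <= text m t ell.
Proof.
move=> V.
suff H : forall n ell, (m.+1 - ell <= n)%N -> inPb delta m ell -> 0 <= text m t ell.
  by move=> ell; apply: (H (m.+1 - ell)%N).
elim=> [|n IH] ell hn hP.
  by have := inP_le hP; lia.
apply: le_trans (V _ hP).
case: (@nextP_spec _ delta m ell) => [->|[h1 h2]].
  by rewrite /text eqxx.
apply: IH h1; have := inP_le hP; lia.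
Qed.

Theorem mainTheorem15 (R : realType) (delta : R) (m : nat) (J : finType)
  (p : 'I_m -> J -> R) (t w : nat -> R) (sigma : J -> 'I_m) :
  0 < delta -> (0 < m)%N ->
  (forall i j, 0 <= p i j) ->
  valid_threshold delta m t ->
  weight_vector m w ->
  exists (x : 'I_m -> J -> R) (y z : nat -> 'I_m -> J -> R),
    OLB_feasible delta p t x y z /\
    LP_obj delta p (sparsify delta m w) y
      <= \sum_(i < m) h_t delta m t (sparsify delta m w) (load p sigma i).
Proof.
move=> _ _ hp V _.
pose x := fun (i : 'I_m) (j : J) => if sigma j == i then (1 : R) else 0.
pose L := fun i => load p sigma i.
pose c := fun ell i => Num.min 1 (text m t ell / L i).
pose z := fun ell i j => x i j * c ell i.
pose y := fun ell i j => x i j * (1 - c ell i).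
have hx : forall i j, 0 <= x i j by move=> i j; rewrite /x; case: ifP.
have hL : forall i, 0 <= L i by move=> i; apply: sumr_ge0 => j _.
have hpL : forall i j, sigma j == i -> p i j <= L i.
  move=> i j hj; rewrite /L /load (bigD1 j) //= lerDl.
  by apply: sumr_ge0 => k _.
have hsum : forall i (k : R), \sum_j p i j * (x i j * k) = L i * k.
  move=> i k; rewrite /L /load mulr_suml [RHS]big_mkcond /=; apply: eq_bigr => j _.
  by rewrite /x; case: ifP => _; rewrite ?mul1r ?mul0r ?mulr0.
have hzext : forall k i j, zext z k i j = z k i j.
  move=> k i j; rewrite /zext; case: eqP => // ->.
  by rewrite /z /c /text eqxx mul0r min_r ?ler01 // mulr0.
have hT := @t_nonneg _ _ _ _ V.
have hTn : forall ell, inPb delta m ell -> 0 <= text m t (nextP delta m ell).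
  move=> ell hP; case: (@nextP_spec _ delta m ell) => [->|[h _]].
    by rewrite /text eqxx.
  exact: hT.
exists x, y, z; split.
  split.
  - split=> // ell i j hP; split; apply: mulr_ge0 => //.
      by apply: cfrac_ge0 => //; apply: hT.
    by rewrite subr_ge0 cfrac_le1.
  - split.
      move=> j; rewrite (bigD1 (sigma j)) //= /x eqxx big1 ?addr0 // => i hi.
      by rewrite eq_sym (negbTE hi).
    by move=> ell i j _; rewrite /z /y; ring.
  - move=> ell i j hP; rewrite hzext /z; apply: ler_wpM2l => //.
    rewrite /c le_min ge_min lexx /= ge_min; apply/orP; right.
    by apply: ler_wpM2r; [rewrite invr_ge0 | exact: V].
  - move=> ell i hP.
    under eq_bigr => j _ do rewrite hzext /z -mulrBr.
    by rewrite hsum; apply: key_olb4 => //; [exact: hTn | exact: V].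
  - move=> ell i j hP.
    have Tell : text m t ell = t ell.
      by rewrite /text ifN //; have := inP_le hP; apply: contraTN => /eqP ->; rewrite ltnn.
    rewrite /y /x; case: ifP => hj; last by rewrite !mul0r !mulr0.
    have := @key_olb5 R (L i) (text m t ell) (p i j) (hp i j) (hpL i j hj) (hT ell hP).
    rewrite -/(c ell i) Tell mul1r mulr1 => h.
    rewrite mulrBr mulr1; lra.
rewrite le_eqVlt; apply/orP; left; apply/eqP.
apply: eq_bigr => i _; rewrite /h_t; apply: eq_bigr => ell hP.
under eq_bigr => j _ do rewrite -mulrA.
rewrite -mulr_sumr hsum key_obj //; last exact: hT.
by rewrite /text ifN // ltn_eqF.
Qed.
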